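(* Let $n$ be odd and let $\mathcal S\subseteq\mathbb Z_3^{2n}$ be an isotropic subspace of dimension $n-1$, with $A(z)=\sum_{\chi\in\mathcal S}z^{\mathrm{wt}(\chi)}$ and $B(z)=\sum_{\chi\in\mathcal S^\perp}z^{\mathrm{wt}(\chi)}$. Then $3A(-1/2)+B(-1/2)=0$. If moreover $B(-1/2)\neq0$ and $3A'(-1/2)+B'(-1/2)=0$, then also $3A''(-1/2)+B''(-1/2)=0$, and consequently the function $$\epsilon'(\epsilon)=\frac{3\big(3A(z(\epsilon))+B(z(\epsilon))\big)}{4B(z(\epsilon))},\qquad z(\epsilon)=\frac{3-\epsilon}{8\epsilon-6},$$ satisfies $\epsilon'(\epsilon)=O(\epsilon^3)$ as $\epsilon\to0$.
   Context: For $\chi=(\vec u|\vec v)\in\mathbb Z_3^{2n}$, $\mathrm{wt}(\chi)=\#\{i:(u_i,v_i)\neq(0,0)\}$. The symplectic form is $[\chi,\chi']=\vec u\cdot\vec v'-\vec u'\cdot\vec v$; $\mathcal S$ isotropic means $[\chi,\chi']=0$ for all $\chi,\chi'\in\mathcal S$; $\mathcal S^\perp=\{\chi\in\mathbb Z_3^{2n}:[\chi,\sigma]=0\ \forall\sigma\in\mathcal S\}$. Primes denote derivatives in $z$. (Note $z(0)=-1/2$.) *)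

(* Defs.v *)
From HB Require Import structures.
From mathcomp Require Import all_boot all_order all_algebra.
Set Implicit Arguments. Unset Strict Implicit. Unset Printing Implicit Defensive.
Import Order.TTheory GRing.Theory Num.Theory.
Local Open Scope ring_scope.

(* Z_3^{2n}: a vector chi = (u | v) is a row vector of length n + n over 'F_3;
   u = lsubmx chi, v = rsubmx chi. *)
Notation vec3 n := ('rV['F_3]_(n + n)) (only parsing).

Definition wt (n : nat) (chi : 'rV['F_3]_(n + n)) : nat :=
  #|[set i : 'I_n | (lsubmx chi 0 i != 0) || (rsubmx chi 0 i != 0)]|.

Definition symp (n : nat) (chi chi' : 'rV['F_3]_(n + n)) : 'F_3 :=
  \sum_(i < n) (lsubmx chi 0 i * rsubmx chi' 0 i)
  - \sum_(i < n) (lsubmx chi' 0 i * rsubmx chi 0 i).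

Definition isotropic (n : nat) (S : {vspace 'rV['F_3]_(n + n)}) : Prop :=
  forall x y, x \in S -> y \in S -> symp x y = 0.

Definition sperp (n : nat) (S : {vspace 'rV['F_3]_(n + n)}) : pred 'rV['F_3]_(n + n) :=
  [pred x | [forall s : 'rV['F_3]_(n + n), (s \in S) ==> (symp x s == 0)]].

Definition wenum (R : nzRingType) (n : nat) (P : pred 'rV['F_3]_(n + n)) : {poly R} :=
  \sum_(x : 'rV['F_3]_(n + n) | P x) 'X^(wt x).

Definition bigO_cube_at0 (R : realFieldType) (f : R -> R) : Prop :=
  exists C : R, exists2 d : R, 0 < d &
    forall e : R, `|e| < d -> `|f e| <= C * `|e| ^+ 3.

(* Main.v *)
Require Import Defs.
From HB Require Import structures.
From mathcomp Require Import all_boot all_order all_algebra all_field.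
From mathcomp Require Import ring lra.
Set Implicit Arguments. Unset Strict Implicit. Unset Printing Implicit Defensive.
Import Order.TTheory GRing.Theory Num.Theory.
Local Open Scope ring_scope.

Lemma sumF3 (T : nmodType) (F : 'F_3 -> T) : \sum_(t : 'F_3) F t = F 0 + F 1 + F (2%:R).
Proof.
rewrite (@big_ord_recr _ _ _ 2) /= big_ord_recr /= big_ord_recr /= big_ord0 add0r.
congr (_ + _ + _); by apply: congr1; apply: val_inj.
Qed.
Lemma caseF3 (t : 'F_3) : t = 0 \/ t = 1 \/ t = 2%:R.
Proof. case: t => [[|[|[|?]]] ?] //; [left|right;left|right;right]; exact: val_inj. Qed.

Section MW.
Variable T : idomainType.
Variable w : T.
Hypothesis w2 : w ^+ 2 + w + 1 = 0.
Hypothesis three : (3 : T) != 0.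

Definition e (t : 'F_3) : T := w ^+ (nat_of_ord t).

Lemma w3 : w ^+ 3 = 1.
Proof. have -> : w ^+ 3 = (w - 1) * (w ^+ 2 + w + 1) + 1 by ring. by rewrite w2 mulr0 add0r. Qed.

Lemma expw k : w ^+ k = w ^+ (k %% 3).
Proof. by rewrite {1}(divn_eq k 3) exprD mulnC exprM w3 expr1n mul1r. Qed.

Lemma e_add a b : e (a + b) = e a * e b.
Proof. by rewrite /e -exprD [in RHS]expw. Qed.

Lemma e0 : e 0 = 1.
Proof. by rewrite /e expr0. Qed.

Lemma w_neq1 : w != 1.
Proof. apply/eqP => h1; move: three; rewrite -w2 h1; have -> : (1:T) ^+ 2 + 1 + 1 = 3 by ring. by rewrite eqxx. Qed.

Lemma e_neq1 t : t != 0 -> e t != 1.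
Proof.
case: (caseF3 t) => [->|[->|->]]; rewrite ?eqxx // => _; rewrite /e /=.
  by rewrite expr1 w_neq1.
apply/eqP => h2; move/eqP: w_neq1; apply; by rewrite -[w]mul1r -{1}h2 -exprSr w3.
Qed.

Lemma charsum (V : finZmodType) (P : pred V) (L : V -> 'F_3) v0 :
  (forall u v, L (u + v) = L u + L v) -> (forall u, P (u + v0) = P u) ->
  L v0 != 0 -> \sum_(v | P v) e (L v) = 0.
Proof.
move=> LD Psh Lv0.
set s := \sum_(v | P v) e (L v).
have hs : s = e (L v0) * s.
  rewrite {1}/s (reindex_inj (addIr v0)) /=.
  under eq_bigl do rewrite Psh.
  under eq_bigr do rewrite LD e_add mulrC.
  by rewrite -mulr_sumr.
have : (1 - e (L v0)) * s = 0 by rewrite mulrBl mul1r -hs subrr.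
move/eqP; rewrite mulf_eq0 subr_eq0 eq_sym (negbTE (e_neq1 Lv0)) /=.
by move/eqP.
Qed.


Lemma w2' : w ^+ 2 = - w - 1.
Proof. have -> : w ^+ 2 = (w ^+ 2 + w + 1) - w - 1 by ring. by rewrite w2 sub0r. Qed.
Lemma coord xu xv (z : T) :
  \sum_(a : 'F_3) \sum_(b : 'F_3) e (xu * b - a * xv) * (if (a != 0) || (b != 0) then z else 1)
  = if (xu != 0) || (xv != 0) then 1 - z else 1 + 8%:R * z.
Proof.
have W := w2'.
case: (caseF3 xu) => [->|[->|->]]; case: (caseF3 xv) => [->|[->|->]];
  rewrite !sumF3 /e /= ?expr0 ?expr1 ?W; ring.
Qed.

Variable n : nat.
Definition toF (y : 'rV['F_3]_(n+n)) : {ffun 'I_n -> 'F_3 * 'F_3} :=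
  [ffun i => (lsubmx y 0 i, rsubmx y 0 i)].
Definition ofF (f : {ffun 'I_n -> 'F_3 * 'F_3}) : 'rV['F_3]_(n+n) :=
  row_mx (\row_i (f i).1) (\row_i (f i).2).
Lemma toFK : cancel ofF toF.
Proof. move=> f; apply/ffunP => i; rewrite ffunE /ofF row_mxKl row_mxKr !mxE; by case: (f i). Qed.
Lemma ofFK : cancel toF ofF.
Proof.
move=> y; rewrite /ofF -[y in RHS]hsubmxK; congr row_mx; apply/rowP => i;
  by rewrite !mxE ffunE /= mxE.
Qed.
Definition Phi (x : 'rV['F_3]_(n+n)) (z : T) (i : 'I_n) (p : 'F_3 * 'F_3) :=
  e (lsubmx x 0 i * p.2 - p.1 * rsubmx x 0 i) * (if (p.1 != 0) || (p.2 != 0) then z else 1).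
Lemma row_prod (x y : 'rV['F_3]_(n+n)) (z : T) : e (symp x y) * z ^+ wt y = \prod_i Phi x z i (toF y i).
Proof.
rewrite /Phi; under eq_bigr do rewrite ffunE /=.
rewrite big_split /=; congr (_ * _).
  by rewrite /symp -sumrB (big_morph e e_add e0).
by rewrite /wt -prodr_const big_mkcond; apply: eq_bigr => i _; rewrite inE.
Qed.
Lemma row_sum (x : 'rV['F_3]_(n+n)) (z : T) : \sum_(y : 'rV['F_3]_(n+n)) e (symp x y) * z ^+ wt y =
  \prod_i (if (lsubmx x 0 i != 0) || (rsubmx x 0 i != 0) then 1 - z else 1 + 8%:R * z).
Proof.
rewrite (eq_bigr _ (fun y _ => row_prod x y z)).
rewrite (reindex ofF); last by apply: onW_bij; exists toF; [exact: toFK | exact: ofFK].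
under eq_bigr do rewrite toFK.
rewrite -bigA_distr_bigA; apply: eq_bigr => i _.
rewrite -(pair_bigA _ (fun a b => Phi x z i (a, b))) /=.
exact: coord.
Qed.
Lemma prod_split (x : 'rV['F_3]_(n+n)) (z : T) :
  \prod_i (if (lsubmx x 0 i != 0) || (rsubmx x 0 i != 0) then 1 - z else 1 + 8%:R * z)
  = (1 - z) ^+ wt x * (1 + 8%:R * z) ^+ (n - wt x).
Proof.
set W := [set i : 'I_n | (lsubmx x 0 i != 0) || (rsubmx x 0 i != 0)].
rewrite (bigID (mem W)) /=; congr (_ * _).
  rewrite -prodr_const; apply: eq_bigr => i; rewrite inE => ->. done.
  have -> : (n - wt x)%N = #|~: W| by rewrite cardsCs setCK card_ord.
rewrite -prodr_const; apply: eq_big => i; rewrite ?inE //.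
by move/negbTE => ->.
Qed.

Lemma symp_anti (x y : 'rV['F_3]_(n+n)) : symp x y = - symp y x.
Proof. by rewrite /symp opprB. Qed.
Lemma sympD (u v y : 'rV['F_3]_(n+n)) : symp (u + v) y = symp u y + symp v y.
Proof.
have hl i : lsubmx (u + v) 0 i = lsubmx u 0 i + lsubmx v 0 i by rewrite linearD /= mxE.
have hr i : rsubmx (u + v) 0 i = rsubmx u 0 i + rsubmx v 0 i by rewrite linearD /= mxE.
rewrite /symp; under eq_bigr do rewrite hl mulrDl.
under [X in _ - X]eq_bigr do rewrite hr mulrDr.
rewrite !big_split /=.
by rewrite opprD addrACA.
Qed.
Lemma inner_sum (S : {vspace 'rV['F_3]_(n+n)}) (y : 'rV['F_3]_(n+n)) :
  \sum_(x | x \in S) e (symp x y) = if sperp S y then (#|S|%:R : T) else 0.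
Proof.
case: ifP => hy.
  transitivity (\sum_(x | x \in S) (1:T)); last by rewrite sumr_const.
  apply: eq_bigr => x xS.
  move/forallP: hy => /(_ x); rewrite xS /= => /eqP h0.
  by rewrite symp_anti h0 oppr0 e0.
move/negbT: hy; rewrite /sperp /= => /forallPn [s]; rewrite negb_imply => /andP [sS hs].
apply: (@charsum _ (mem S) (fun x => symp x y) s).
- by move=> a b; rewrite sympD.
- by move=> a; rewrite /= rpredDr.
- by rewrite symp_anti oppr_eq0.
Qed.
Lemma macw (S : {vspace 'rV['F_3]_(n+n)}) (z : T) :
  #|S|%:R * \sum_(y | sperp S y) z ^+ wt y
  = \sum_(x | x \in S) (1 - z) ^+ wt x * (1 + 8%:R * z) ^+ (n - wt x).
Proof.
symmetry.
rewrite (eq_bigr _ (fun x _ => esym (prod_split x z))).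
rewrite (eq_bigr _ (fun x _ => esym (row_sum x z))).
rewrite exchange_big /=.
under eq_bigr => y _ do rewrite -mulr_suml inner_sum.
rewrite mulr_sumr [in RHS]big_mkcond; apply: eq_bigr => y _.
by case: ifP => _; rewrite ?mul0r ?mulr0.
Qed.
End MW.
Definition MWp (K : comNzRingType) (n : nat) (S : {vspace 'rV['F_3]_(n+n)}) : {poly K} :=
  \sum_(x | x \in S) (1 - 'X) ^+ wt x * (1 + 8%:R * 'X) ^+ (n - wt x).

Lemma map_wenum (K : comNzRingType) n (P : pred 'rV['F_3]_(n+n)) :
  map_poly (intr : int -> K) (wenum int P) = wenum K P.
Proof. rewrite /wenum rmorph_sum; apply: eq_bigr => x _; by rewrite rmorphXn /= map_polyX. Qed.

Lemma map_MWp (K : comNzRingType) n S :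
  map_poly (intr : int -> K) (@MWp int n S) = MWp K S.
Proof.
rewrite /MWp rmorph_sum; apply: eq_bigr => x _.
by rewrite rmorphM !rmorphXn rmorphB rmorphD rmorphM rmorph1 rmorph_nat /= map_polyX.
Qed.

Definition omega : algC := (-1 + sqrtC (-3)) / 2.
Lemma omega2 : omega ^+ 2 + omega + 1 = 0.
Proof.
rewrite /omega; set s := sqrtC _.
have -> : ((-1 + s) / 2) ^+ 2 + (-1 + s) / 2 + 1 = (s ^+ 2 + 3) / 4 :> algC.
  by field.
by rewrite /s sqrtCK addrC subrr mul0r.
Qed.

Lemma macw_alg n (S : {vspace 'rV['F_3]_(n+n)}) :
  #|S|%:R * wenum algC (sperp S) = MWp algC S.
Proof.
have w2 : (omega%:P) ^+ 2 + omega%:P + 1 = 0 :> {poly algC}.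
  by rewrite -polyC_exp -polyCD -polyC1 -polyCD omega2.
have h3 : (3 : {poly algC}) != 0.
  have -> : (3 : {poly algC}) = (3 : algC)%:P by rewrite rmorph_nat.
  by rewrite polyC_eq0 pnatr_eq0.
exact: (macw w2 h3 S 'X).
Qed.

Lemma macw_int n (S : {vspace 'rV['F_3]_(n+n)}) :
  #|S|%:R * wenum int (sperp S) = MWp int S.
Proof.
apply/polyP => i; apply: (@intr_inj algC).
rewrite -!(coef_map (intr : int -> algC)) map_MWp rmorphM rmorph_nat /= map_wenum.
by move: (macw_alg S) => /= ->.
Qed.

Lemma macw_R (R : comNzRingType) n (S : {vspace 'rV['F_3]_(n+n)}) :
  #|S|%:R * wenum R (sperp S) = MWp R S.
Proof.
by rewrite -map_wenum -map_MWp -macw_int rmorphM rmorph_nat.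
Qed.


Section Jet.
Variable R : realFieldType.
Variable t : {poly R}.
Definition J (p : {poly R}) (a b c : R) :=
  exists r, p = a%:P + b *: t + c *: t ^+ 2 + t ^+ 3 * r.

Lemma J_eq p a b c a' b' c' : J p a b c -> a = a' -> b = b' -> c = c' -> J p a' b' c'.
Proof. by move=> H <- <- <-. Qed.

Lemma J_add p q a b c a' b' c' : J p a b c -> J q a' b' c' ->
  J (p + q) (a + a') (b + b') (c + c').
Proof.
move=> [r ->] [r' ->]; exists (r + r').
rewrite polyCD -!mul_polyC !polyCD; ring.
Qed.

Lemma J_scale p a b c k : J p a b c -> J (k *: p) (k * a) (k * b) (k * c).
Proof.
move=> [r ->]; exists (k *: r).
rewrite -!mul_polyC !polyCM; ring.
Qed.

Lemma J_mul p q a b c a' b' c' : J p a b c -> J q a' b' c' ->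
  J (p * q) (a * a') (a * b' + b * a') (a * c' + b * b' + c * a').
Proof.
move=> [r ->] [r' ->].
exists (b%:P * c'%:P + c%:P * b'%:P + c%:P * c'%:P * t + r * (a'%:P + b'%:P * t + c'%:P * t ^+ 2 + t ^+ 3 * r')
   + (a%:P + b%:P * t + c%:P * t ^+ 2) * r').
rewrite -!mul_polyC !polyCD !polyCM; ring.
Qed.

Lemma J_mulrn p a b c k : J p a b c -> J (p *+ k) (a *+ k) (b *+ k) (c *+ k).
Proof.
move=> H; elim: k => [|k IH]; first by rewrite !mulr0n; exists 0; rewrite polyC0 !scale0r mulr0 !addr0.
by rewrite !mulrS; apply: J_add.
Qed.

Lemma J_sum (I : finType) (P : pred I) (F : I -> {poly R}) (a b c : I -> R) :
  (forall i, P i -> J (F i) (a i) (b i) (c i)) ->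
  J (\sum_(i | P i) F i) (\sum_(i | P i) a i) (\sum_(i | P i) b i) (\sum_(i | P i) c i).
Proof.
move=> H; elim: (index_enum I) => [|i s IH].
  by rewrite !big_nil; exists 0; rewrite polyC0 !scale0r mulr0 !addr0.
rewrite !big_cons; case: ifP => // Pi; exact: J_add (H i Pi) IH.
Qed.

Lemma J_lin a be : J (a%:P + (a * be) *: t) a (a * be) 0.
Proof. by exists 0; rewrite scale0r mulr0 !addr0. Qed.

Lemma J_pow p a be k : J p a (a * be) 0 ->
  J (p ^+ k) (a ^+ k) (a ^+ k * (k%:R * be)) (a ^+ k * ('C(k, 2)%:R * be ^+ 2)).
Proof.
move=> H; elim: k => [|k IH].
  by rewrite !expr0 bin0n !mul0r mulr0; exists 0; rewrite polyC1 !scale0r mulr0 !addr0.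
rewrite exprS mulrC; apply: J_eq (J_mul IH H) _ _ _.
- by rewrite exprS mulrC.
- by rewrite [a ^+ k.+1]exprS -addn1 natrD; ring.
- by rewrite [a ^+ k.+1]exprS binS bin1 natrD; ring.
Qed.



End Jet.

Lemma J_eval (R : realFieldType) (h : R) p a b c : J ('X - h%:P) p a b c ->
  p.[h] = a /\ (p^`()).[h] = b /\ (p^`(2)).[h] = c *+ 2.
Proof.
move=> [r ->]; set t := 'X - h%:P.
have th : t.[h] = 0 by rewrite /t hornerXsubC subrr.
have dt : t^`() = 1 by rewrite /t derivXsubC.
rewrite derivnS derivn1.
rewrite !(derivD, derivZ, derivC, derivM, deriv_exp, dt) /=.
rewrite ?(derivD, derivZ, derivC, derivM, deriv_exp, dt, derivMn) /=.
have d1 : (1 : {poly R})^`() = 0 by rewrite -polyC1 derivC.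
rewrite !derivX !derivN !derivC ?oppr0 ?d1 ?addr0 !hornerE subrr /=.
split; first by ring.
split; first by ring.
ring.
Qed.


Lemma bin2R (R : realFieldType) k : 'C(k, 2)%:R = k%:R * (k%:R - 1) / 2 :> R.
Proof.
elim: k => [|k IH]; first by rewrite bin0n mul0r mul0r.
by rewrite binS bin1 natrD IH -addn1 natrD; field.
Qed.

Section Wt.
Variable R : realFieldType.
Variable n : nat.
Hypothesis on : odd n.
Let h : R := - (1 / 2).
Let t : {poly R} := 'X - h%:P.
Definition c0 : R := ((3:R) ^+ n.-1)^-1.
Definition E (w : nat) : {poly R} :=
  'X ^+ w *+ 3 + c0 *: ((1 - 'X) ^+ w * (1 + 8%:R * 'X) ^+ (n - w)).
Definition Lw (w : nat) : R :=
  3 * h ^+ w * (-2 * w%:R + 2/3 * w%:R + 8/3 * (n%:R - w%:R)).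
Definition kap : R := - (4 * (n%:R - 1) / 3).

Lemma linE (a be : R) : a%:P + (a * be) *: t = (a - a * be * h)%:P + (a * be) *: 'X.
Proof. rewrite /t scalerBr -!mul_polyC polyCB !polyCM; ring. Qed.

Lemma key w : (w <= n)%N ->
  c0 * ((3/2) ^+ w * (-3) ^+ (n - w)) = - (3 * h ^+ w).
Proof.
move=> hw.
have n0 : (0 < n)%N by case: n on.
have h1 : (3/2 : R) = 3 * 2^-1 by [].
have h2 : (-3 : R) = -1 * 3 by rewrite mulN1r.
have h3 : h = -1 * 2^-1 by rewrite /h mulN1r mul1r.
rewrite h2 h3 !exprMn.
set s := (-1 : R) ^+ w; set q := (2^-1 : R) ^+ w.
have e3 : (3:R) ^+ w * 3 ^+ (n - w) = 3 * 3 ^+ n.-1.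
  by rewrite -exprD subnKC // -exprS prednK.
have es : (-1:R) ^+ (n - w) = - s.
  have : (-1:R) ^+ (n - w) * s = -1 by rewrite /s -exprD subnK // -signr_odd on expr1.
  have ss : s * s = 1 by rewrite /s -exprMn mulrNN mulr1 expr1n.
  move=> H; have -> : (-1:R) ^+ (n - w) = (-1) ^+ (n - w) * (s * s) by rewrite ss mulr1.
  by rewrite mulrA H mulN1r.
rewrite es.
have -> : c0 * (3 ^+ w * q * (- s * 3 ^+ (n - w))) = - (c0 * (3 ^+ w * 3 ^+ (n - w)) * (s * q)).
  ring.
rewrite e3 /c0; field.
by rewrite expf_neq0 // pnatr_eq0.
Qed.

Lemma J_E w : (w <= n)%N -> J t (E w) 0 (Lw w) (kap * Lw w).
Proof.
move=> hw.
have hX : 'X = h%:P + (h * -2) *: t.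
  rewrite linE.
  have -> : h - h * -2 * h = 0 by rewrite /h; field.
  have -> : h * -2 = 1 by rewrite /h; field.
  by rewrite polyC0 add0r scale1r.
have h1X : 1 - 'X = (3/2)%:P + ((3/2) * (-2/3)) *: t.
  rewrite linE.
  have -> : 3/2 - 3/2 * (-2/3) * h = 1 by rewrite /h; field.
  have -> : (3/2 : R) * (-2/3) = -1 by field.
  by rewrite polyC1 scaleN1r.
have h8X : 1 + 8%:R * 'X = (-3)%:P + ((-3) * (-8/3)) *: t.
  rewrite linE.
  have -> : -3 - -3 * (-8/3) * h = 1 by rewrite /h; field.
  have -> : (-3 : R) * (-8/3) = 8%:R by field.
  by rewrite polyC1 scaler_nat mulr_natl.
have JX := J_pow w (J_lin t h (-2)); rewrite -hX in JX.
have JA := J_pow w (J_lin t (3/2) (-2/3)); rewrite -h1X in JA.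
have JB := J_pow (n - w) (J_lin t (-3) (-8/3)); rewrite -h8X in JB.
have JE := J_add (J_mulrn 3 JX) (J_scale c0 (J_mul JA JB)).
have A2n : (3/2 : R) ^+ w != 0 by rewrite expf_neq0 // mulf_neq0 ?invr_eq0 ?pnatr_eq0.
have A3n : (-3 : R) ^+ (n - w) != 0 by rewrite expf_neq0 // oppr_eq0 pnatr_eq0.
have c0E : c0 = - (3 * h ^+ w) / ((3/2) ^+ w * (-3) ^+ (n - w)).
  by rewrite -(key hw); field; rewrite A3n A2n.
apply: (J_eq JE).
- rewrite c0E; field; rewrite ?A2n ?A3n //.
- rewrite c0E /Lw natrB //; field; rewrite ?A2n ?A3n //.
- rewrite c0E /Lw /kap !bin2R natrB //; field; rewrite ?A2n ?A3n //.
Qed.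
End Wt.


Lemma poly_bound (R : realFieldType) (h : R) (p : {poly R}) :
  exists2 M, 0 <= M & forall z, `|z - h| <= 1 -> `|p.[z]| <= M.
Proof.
elim/poly_ind: p => [|p c [M M0 bM]].
  by exists 0 => // z _; rewrite horner0 normr0.
exists (M * (`|h| + 1) + `|c|).
  by rewrite addr_ge0 // mulr_ge0 // addr_ge0.
move=> z hz; rewrite hornerMXaddC.
have hz' : `|z| <= `|h| + 1.
  have := ler_normD (z - h) h; rewrite subrK => H; lra.
apply: le_trans (ler_normD _ _) _; rewrite normrM lerD2r.
by apply: ler_pM => //; apply: bM.
Qed.

Lemma bigO_ext (R : realFieldType) (f g : R -> R) :
  (forall e, f e = g e) -> bigO_cube_at0 g -> bigO_cube_at0 f.
Proof. by move=> fg [C [d d0 H]]; exists C; exists d => // e he; rewrite fg; apply: H. Qed.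

Lemma bigO_final (R : realFieldType) (G B r : {poly R}) :
  G = ('X - (- (1/2))%:P) ^+ 3 * r -> B.[- (1/2)] != 0 ->
  bigO_cube_at0 (fun eps : R => let z := (3 - eps) / (8 * eps - 6) in 3 * G.[z] / (4 * B.[z])).
Proof.
set h : R := - (1/2).
move=> GE Bh.
have /factor_theorem [q hq] : root (B - (B.[h])%:P) h.
  by rewrite /root hornerD hornerN hornerC subrr.
have [Mq Mq0 bq] := poly_bound h q.
have [Mr Mr0 br] := poly_bound h r.
set b := `|B.[h]|.
have b0 : 0 < b by rewrite normr_gt0.
exists (3 * Mr / (2 * b)).
exists (Num.min (1/8) (b / (2 * (Mq + 1)))).
  by rewrite lt_min; apply/andP; split; [lra| apply: divr_gt0 => //; lra].
move=> e; rewrite lt_min => /andP [he8 hed] /=.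
set z := (3 - e) / (8 * e - 6).
have ee : - (1/8) < e < 1/8 by rewrite -ltr_norml.
have e0 : 0 <= `|e| by [].
have D0 : 8 * e - 6 != 0 by apply/eqP; lra.
have zh : z - h = 3 * e / (8 * e - 6) by rewrite /z /h; field.
have zhn : `|z - h| * (6 - 8 * e) = 3 * `|e|.
  have -> : 6 - 8 * e = `|8 * e - 6| by rewrite ler0_norm; [ring| lra].
  by rewrite -normrM zh divfK // normrM ger0_norm.
have zhe : `|z - h| <= `|e|.
  have X0 : 0 <= `|z - h| by [].
  nra.
have zh1 : `|z - h| <= 1 by lra.
have Bz : B.[z] = B.[h] + q.[z] * (z - h).
  have := congr1 (fun p => p.[z]) hq; rewrite /= hornerD hornerN hornerC hornerM hornerXsubC.
  move=> <-; ring.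
have hed' : `|e| * (2 * (Mq + 1)) < b by rewrite -ltr_pdivlMr //; lra.
have qz : `|q.[z] * (z - h)| <= Mq * `|e|.
  by rewrite normrM; apply: ler_pM => //; apply: bq.
have Bzb : b <= 2 * `|B.[z]|.
  have := lerB_normD (B.[h]) (q.[z] * (z - h)); rewrite -Bz -/b => H.
  nra.
have Gz : `|G.[z]| <= `|e| ^+ 3 * Mr.
  rewrite GE hornerM horner_exp hornerXsubC normrM normrX.
  apply: ler_pM => //; first exact: exprn_ge0.
    by apply: lerXn2r; rewrite ?nnegrE.
  exact: br.
have Bz0 : 0 < `|B.[z]| by lra.
rewrite normrM normfV !normrM !normr_nat.
rewrite ler_pdivrMr; last by rewrite mulr_gt0.
set E3 := `|e| ^+ 3.
have E30 : 0 <= E3 by rewrite exprn_ge0.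
have C0 : 0 <= 3 * Mr / (2 * b) by rewrite divr_ge0 // ?mulr_ge0 // ltW.
have Cb : 3 * Mr / (2 * b) * (2 * b) = 3 * Mr by rewrite divfK // mulf_neq0 // gt_eqF.
set C := 3 * Mr / (2 * b).
have H1 : C * E3 * (2 * b) = 3 * (E3 * Mr) by rewrite mulrAC Cb; ring.
apply: le_trans (_ : _ <= 3 * (E3 * Mr)) _; first by rewrite ler_wpM2l.
rewrite -H1 ler_wpM2l ?mulr_ge0 //; last lra.
by rewrite invr_ge0 mulr_ge0 // ltW.
Qed.

Unset Implicit Arguments.

Lemma wt_le n (x : 'rV['F_3]_(n + n)) : (wt x <= n)%N.
Proof. by rewrite /wt; apply: leq_trans (max_card _) _; rewrite card_ord. Qed.

Theorem mainTheorem6 (R : realFieldType) (n : nat)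
  (S : {vspace 'rV['F_3]_(n + n)}) :
  odd n -> isotropic S -> \dim S = n.-1 ->
  let A : {poly R} := wenum R (fun x => x \in S) in
  let B : {poly R} := wenum R (sperp S) in
  let h : R := - (1 / 2) in
  3 * A.[h] + B.[h] = 0 /\
  (B.[h] != 0 -> 3 * (A^`()).[h] + (B^`()).[h] = 0 ->
     3 * (A^`(2)).[h] + (B^`(2)).[h] = 0 /\
     bigO_cube_at0 (fun eps : R =>
       let z := (3 - eps) / (8 * eps - 6) in
       3 * (3 * A.[z] + B.[z]) / (4 * B.[z]))).
Proof.
move=> on _ dimS A B h.
have cardS : (#|S|%:R : R) = 3 ^+ n.-1 by rewrite card_vspace card_Fp // dimS natrX.
have BE : B = c0 R n *: MWp R S.
  rewrite -macw_R mulr_natl -scaler_nat scalerA cardS /c0 mulVf ?scale1r //.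
  by rewrite expf_neq0 ?pnatr_eq0.
have GE : A *+ 3 + B = \sum_(x | x \in S) E R n (wt x).
  rewrite BE /MWp scaler_sumr /A /wenum -sumrMnl -big_split /=.
  by apply: eq_bigr => x _; rewrite /E.
set L := \sum_(x | x \in S) Lw R n (wt x).
have JG : J ('X - h%:P) (A *+ 3 + B) 0 L (kap R n * L).
  rewrite GE /L mulr_sumr.
  apply: J_eq (@J_sum R _ _ (fun x => x \in S) (fun x => E R n (wt x)) (fun=> 0) (fun x => Lw R n (wt x)) (fun x => kap R n * Lw R n (wt x)) (fun x _ => J_E R on (@wt_le n x))) _ _ _ => //.
  by rewrite big1.
have [G0 [G1 G2]] := J_eval JG.
have e0 z : (A *+ 3 + B).[z] = 3 * A.[z] + B.[z] by rewrite hornerD hornerMn mulr_natl.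
have e1 : (A *+ 3 + B)^`().[h] = 3 * (A^`()).[h] + (B^`()).[h].
  by rewrite derivD derivMn hornerD hornerMn mulr_natl.
have e2 : (A *+ 3 + B)^`(2).[h] = 3 * (A^`(2)).[h] + (B^`(2)).[h].
  by rewrite derivnD derivnMn hornerD hornerMn mulr_natl.
split; first by rewrite -e0 G0.
move=> Bh0 hd1.
have L0 : L = 0 by rewrite -G1 e1.
split; first by rewrite -e2 G2 L0 mulr0 mul0rn.
case: JG => r hr; rewrite L0 mulr0 polyC0 !scale0r !add0r in hr.
apply: bigO_ext (bigO_final hr Bh0) => eps /=.
by rewrite e0.
Qed.
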